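(* Let $K\in\mathbb{N}$, let $\mu$ be a positive even integer, let $h>0$, and let $\alpha<\beta\le\gamma<\delta$ be real numbers with $\beta-\alpha=\delta-\gamma=h$. Let $$\xi^1_\kappa=\alpha+\frac{\beta-\alpha}{K+1}\kappa,\qquad \xi^2_\kappa=\gamma+\frac{\delta-\gamma}{K+1}\kappa,\qquad \kappa=1,\dots,K,$$ and for $i=1,2$ set $$B_{\mu,i}(x)=\frac{\prod_{\kappa=1}^K|x-\xi^i_\kappa|^{-\mu}}{\prod_{\kappa=1}^K|x-\xi^1_\kappa|^{-\mu}+\prod_{\kappa=1}^K|x-\xi^2_\kappa|^{-\mu}}.$$ For $t\ge 0$ and $k\in\{1,\dots,K-1\}$ define $$F_\mu(t,h,k,K)=\left(\frac{k!\,(K-k)!}{\prod_{\kappa=1}^K(K-k+\kappa)+(K+1)^K\left(\frac{t}{h}\right)^K}\right)^{\mu}.$$ Then for every $k=1,\dots,K-1$ and every $x\in(\xi^1_k,\xi^1_{k+1})$, $$B_{\mu,2}(x)\le F_\mu(\gamma-\beta,h,k,K),$$ and for every $k=1,\dots,K-1$ and every $x\in(\xi^2_k,\xi^2_{k+1})$, $$B_{\mu,1}(x)\le \left(\frac{k!\,(K-k)!}{\prod_{\kappa=1}^K(k+\kappa)+(K+1)^K\left(\frac{\gamma-\beta}{h}\right)^K}\right)^{\mu}=F_\mu(\gamma-\beta,h,K-k,K).$$ *)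

(* Defs.v *)
From mathcomp Require Import all_boot all_order all_algebra.
Set Implicit Arguments. Unset Strict Implicit. Unset Printing Implicit Defensive.
Import Order.TTheory GRing.Theory Num.Theory.
Local Open Scope ring_scope.

Definition xi (R : realFieldType) (a b : R) (K kappa : nat) : R :=
  a + (b - a) / (K.+1)%:R * kappa%:R.

Definition Pnode (R : realFieldType) (mu K : nat) (a b x : R) : R :=
  \prod_(1 <= kappa < K.+1) (`|x - xi a b K kappa| ^+ mu)^-1.

Definition Bmu (R : realFieldType) (mu K : nat) (alpha beta gamma delta : R)
  (i : nat) (x : R) : R :=
  (if i == 1%N then Pnode mu K alpha beta x else Pnode mu K gamma delta x) /
  (Pnode mu K alpha beta x + Pnode mu K gamma delta x).

Definition Fmu (R : realFieldType) (mu : nat) (t h : R) (k K : nat) : R :=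
  ((k`! * (K - k)`!)%:R /
   ((\prod_(1 <= kappa < K.+1) (K - k + kappa)%N%:R) + (K.+1)%:R ^+ K * (t / h) ^+ K))
  ^+ mu.

(* Main.v *)
Require Import Defs.
From mathcomp Require Import all_boot all_order all_algebra.
From mathcomp Require Import lra zify ring.
Set Implicit Arguments. Unset Strict Implicit. Unset Printing Implicit Defensive.
Import Order.TTheory GRing.Theory Num.Theory.
Lemma nat_fact1 (k : nat) :
  \prod_(1 <= i < k.+1) (k.+1 - i)%N = k`!.
Proof.
rewrite fact_prod big_nat_rev /=.
apply: eq_big_nat => i /andP[h1 h2]; lia.
Qed.

Lemma nat_fact2 (k K : nat) : (k <= K)%N ->
  \prod_(k.+1 <= i < K.+1) (i - k)%N = (K - k)`!.
Proof.
elim: K => [|K IH] hk.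
  by move: hk; rewrite leqn0 => /eqP ->; rewrite big_geq.
case: (ltngtP k K.+1) => h; last first.
- by rewrite h big_geq // subnn.
- lia.
rewrite big_nat_recr //= IH; last lia.
have -> : (K.+1 - k = (K - k).+1)%N by lia.
by rewrite factS mulnC.
Qed.

Lemma nat_fact (k K : nat) : (k <= K)%N ->
  \prod_(1 <= i < K.+1) (if (i <= k)%N then k.+1 - i else i - k)%N = (k`! * (K - k)`!)%N.
Proof.
move=> hk; rewrite (@big_cat_nat _ _ _ k.+1) //.

rewrite -nat_fact1 -nat_fact2 //; congr (_ * _)%N.
  by apply: eq_big_nat => i /andP[h1 h2]; rewrite ifT //; lia.
by apply: eq_big_nat => i /andP[h1 h2]; rewrite ifF //; lia.
Qed.

Lemma nat_rev (k K : nat) :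
  \prod_(1 <= i < K.+1) (k + K.+1 - i)%N = \prod_(1 <= i < K.+1) (k + i)%N.
Proof.
rewrite big_nat_rev /=; apply: eq_big_nat => i /andP[h1 h2]; lia.
Qed.

Local Open Scope ring_scope.

Lemma prod_lb (R : realFieldType) (t : R) (a : nat -> R) (n : nat) :
  (0 < n)%N -> 0 <= t -> (forall i, 0 <= a i) ->
  \prod_(1 <= i < n.+1) a i + t ^+ n <= \prod_(1 <= i < n.+1) (t + a i).
Proof.
move=> + t0 a0; elim: n => [//|n IH] _.
case: n IH => [|n] IH.
  by rewrite !big_nat1 expr1 addrC.
have := IH isT.
rewrite (big_nat_recr n.+2 1 a) // (big_nat_recr n.+2 1 (fun i => t + a i)) //=.
set C := \prod_(1 <= i < n.+2) a i.
set P := \prod_(1 <= i < n.+2) (t + a i).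
move=> H.
have C0 : 0 <= C by apply: prodr_ge0 => i _.
have tn : 0 <= t ^+ n.+1 by apply: exprn_ge0.
have an := a0 n.+2.
have : (C + t ^+ n.+1) * (t + a n.+2) <= P * (t + a n.+2).
  by apply: ler_wpM2r => //; apply: addr_ge0.
rewrite [t ^+ n.+2]exprS.
have h1 : 0 <= C * t by apply: mulr_ge0.
have h2 : 0 <= t ^+ n.+1 * a n.+2 by apply: mulr_ge0.
move=> h3; apply: le_trans h3.
rewrite mulrDl !mulrDr (mulrC t (t ^+ _)); lra.
Qed.

Lemma numer (R : realFieldType) (s a x : R) (k K : nat) : 0 < s -> (k <= K)%N ->
  a + s * k%:R < x < a + s * k.+1%:R ->
  0 < \prod_(1 <= i < K.+1) `|x - (a + s * i%:R)| <= s ^+ K * (k`! * (K - k)`!)%:R.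
Proof.
move=> s0 hk /andP[hl hu].
have F : forall i, (0 < `|x - (a + s * i%:R)|) &&
   (`|x - (a + s * i%:R)| <= s * (if (i <= k)%N then k.+1 - i else i - k)%N%:R).
  move=> i; case: ifP => hi.
    rewrite natrB; last lia.
    have : i%:R <= k%:R :> R by rewrite ler_nat.
    move=> hik.
    have h1 : s * i%:R <= s * k%:R by rewrite ler_pM2l.
    rewrite gtr0_norm; last lra.
    apply/andP; split; first lra.
    rewrite mulrBr; lra.
  rewrite natrB; last lia.
  have : k.+1%:R <= i%:R :> R by rewrite ler_nat; lia.
  move=> hik.
  have h1 : s * k.+1%:R <= s * i%:R by rewrite ler_pM2l.
  rewrite ltr0_norm; last lra.
  apply/andP; split; first lra.
  rewrite mulrBr -[k.+1]addn1 natrD mulrDr mulr1 in hu *; lra.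
apply/andP; split.
  by apply: prodr_gt0 => i _; case/andP: (F i).
rewrite -(nat_fact hk) natr_prod.
have -> : s ^+ K = \prod_(1 <= i < K.+1) s by rewrite prodr_const_nat subn1.
rewrite -big_split /=.
apply: ler_prod => i _; case/andP: (F i) => h1 h2.
by rewrite h2 ltW.
Qed.

Lemma denom (R : realFieldType) (t s : R) (c : nat -> nat) (F : nat -> R) (K : nat) :
  (0 < K)%N -> 0 <= t -> 0 <= s ->
  (forall i, (1 <= i <= K)%N -> t + s * (c i)%:R <= F i) ->
  s ^+ K * (\prod_(1 <= i < K.+1) c i)%:R + t ^+ K <= \prod_(1 <= i < K.+1) F i.
Proof.
move=> K0 t0 s0 hF.
apply: (@le_trans _ _ (\prod_(1 <= i < K.+1) (t + s * (c i)%:R))).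
  have -> : s ^+ K = \prod_(1 <= i < K.+1) s by rewrite prodr_const_nat subn1.
  rewrite natr_prod -big_split /=.
  by apply: prod_lb => // i; apply: mulr_ge0.
rewrite big_nat [X in _ <= X]big_nat.
apply: ler_prod => i /andP[h1 h2]; rewrite hF ?andbT; last lia.
by apply: addr_ge0 => //; apply: mulr_ge0.
Qed.

Lemma final (R : realFieldType) (mu : nat) (A1 A2 N D c : R) :
  0 < A1 -> A1 <= N -> 0 < D -> D <= A2 -> N / D <= c ->
  (A2 ^+ mu)^-1 / ((A1 ^+ mu)^-1 + (A2 ^+ mu)^-1) <= c ^+ mu.
Proof.
move=> A10 hN D0 hD hc.
have A20 : 0 < A2 by apply: lt_le_trans hD.
have P1 : 0 < (A1 ^+ mu)^-1 by rewrite invr_gt0 exprn_gt0.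
have P2 : 0 < (A2 ^+ mu)^-1 by rewrite invr_gt0 exprn_gt0.
apply: (@le_trans _ _ ((A2 ^+ mu)^-1 / (A1 ^+ mu)^-1)).
  rewrite ler_pM2l // lef_pV2 ?posrE //; last by rewrite addr_gt0.
  by rewrite lerDl ltW.
rewrite invrK mulrC -exprVn -exprMn.
apply: lerXn2r; rewrite ?nnegrE.
- by rewrite mulr_ge0 // ltW // invr_gt0.
- apply: le_trans hc; rewrite mulr_ge0 // ?invr_ge0 ltW //; apply: lt_le_trans hN => //.
apply: le_trans hc; apply: ler_pM => //; first exact: ltW.
  by rewrite invr_ge0 ltW.
by rewrite lef_pV2 ?posrE.
Qed.
Lemma ratio (R : realFieldType) (s h t a P : R) (K : nat) : 0 < h -> s = h / K.+1%:R ->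
  (s ^+ K * a) / (s ^+ K * P + t ^+ K) = a / (P + K.+1%:R ^+ K * (t / h) ^+ K).
Proof.
move=> h0 hs.
have s0 : s != 0 by rewrite hs mulf_neq0 ?invr_eq0 ?pnatr_eq0 // gt_eqF.
have -> : t ^+ K = s ^+ K * (K.+1%:R ^+ K * (t / h) ^+ K).
  rewrite -!exprMn; congr (_ ^+ _); rewrite hs; field.
  rewrite gt_eqF //= addrC natr1 pnatr_eq0 //.
rewrite -mulrDr invfM mulrACA mulfV ?mul1r //.
by rewrite expf_neq0.
Qed.

Theorem lemma1 (R : realFieldType) (K mu : nat) (h alpha beta gamma delta : R) :
  (0 < mu)%N -> ~~ odd mu -> 0 < h ->
  alpha < beta -> beta <= gamma -> gamma < delta ->
  beta - alpha = h -> delta - gamma = h ->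
  (forall k : nat, (1 <= k <= K - 1)%N -> forall x : R,
     xi alpha beta K k < x < xi alpha beta K k.+1 ->
     Bmu mu K alpha beta gamma delta 2 x <= Fmu mu (gamma - beta) h k K)
  /\
  (forall k : nat, (1 <= k <= K - 1)%N -> forall x : R,
     xi gamma delta K k < x < xi gamma delta K k.+1 ->
     Bmu mu K alpha beta gamma delta 1 x <=
       ((k`! * (K - k)`!)%:R /
        ((\prod_(1 <= kappa < K.+1) (k + kappa)%N%:R)
         + (K.+1)%:R ^+ K * ((gamma - beta) / h) ^+ K)) ^+ mu
     /\
     ((k`! * (K - k)`!)%:R /
        ((\prod_(1 <= kappa < K.+1) (k + kappa)%N%:R)
         + (K.+1)%:R ^+ K * ((gamma - beta) / h) ^+ K)) ^+ mu
       = Fmu mu (gamma - beta) h (K - k) K).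
Proof.
move=> mu0 ev h0 ab bg gd Hab Hdg.
set s := h / K.+1%:R.
have s0 : 0 < s by rewrite divr_gt0 // ltr0n.
have xi1 : forall i, xi alpha beta K i = alpha + s * i%:R by move=> i; rewrite /xi Hab.
have xi2 : forall i, xi gamma delta K i = gamma + s * i%:R by move=> i; rewrite /xi Hdg.
have PN1 : forall x, Pnode mu K alpha beta x =
    ((\prod_(1 <= i < K.+1) `|x - (alpha + s * i%:R)|) ^+ mu)^-1.
  move=> x; rewrite /Pnode prodfV prodrXl; congr ((_ ^+ _)^-1).
  by apply: eq_bigr => i _; rewrite xi1.
have PN2 : forall x, Pnode mu K gamma delta x =
    ((\prod_(1 <= i < K.+1) `|x - (gamma + s * i%:R)|) ^+ mu)^-1.
  move=> x; rewrite /Pnode prodfV prodrXl; congr ((_ ^+ _)^-1).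
  by apply: eq_bigr => i _; rewrite xi2.
have sK : s * K.+1%:R = h by rewrite /s mulfVK // pnatr_eq0.
set t := gamma - beta.
have t0 : 0 <= t by rewrite /t subr_ge0.
have gam : gamma = alpha + s * K.+1%:R + t by rewrite sK /t; lra.
have sK0 : 0 < s ^+ K by rewrite exprn_gt0.
split.
  move=> k /andP[k1 kK] x; rewrite !xi1 => hx.
  have kK' : (k <= K)%N by lia.
  have K0 : (0 < K)%N by lia.
  rewrite /Bmu /= PN1 PN2.
  case/andP: (numer s0 kK' hx) => A10 A1N.
  apply: (@final _ _ _ _ (s ^+ K * (k`! * (K - k)`!)%:R)
                (s ^+ K * (\prod_(1 <= i < K.+1) (K - k + i)%N)%:R + t ^+ K)) => //.
  - apply: ltr_wpDr; first exact: exprn_ge0.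
    apply: mulr_gt0 => //; rewrite ltr0n prodn_gt0 // => i; lia.
  - apply: denom => // [|i hi]; first exact: ltW.
    rewrite distrC; apply: le_trans (ler_norm _).
    case/andP: hx => _ hx.
    rewrite -natr1 mulrDr mulr1 in hx.
    rewrite natrD natrB // gam -natr1 !mulrDr ?mulrN mulr1; lra.
  - by rewrite (@ratio _ s h t) // /Fmu natr_prod.
move=> k /andP[k1 kK] x; rewrite !xi2 => hx.
have kK' : (k <= K)%N by lia.
have K0 : (0 < K)%N by lia.
split; last first.
  rewrite /Fmu subKn // mulnC; congr (_ ^+ _); congr (_ / (_ + _)).
rewrite /Bmu /= PN1 PN2 addrC.
case/andP: (numer s0 kK' hx) => A10 A1N.
apply: (@final _ _ _ _ (s ^+ K * (k`! * (K - k)`!)%:R)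
              (s ^+ K * (\prod_(1 <= i < K.+1) (k + K.+1 - i)%N)%:R + t ^+ K)) => //.
- apply: ltr_wpDr; first exact: exprn_ge0.
  apply: mulr_gt0 => //; rewrite nat_rev ltr0n prodn_gt0 // => i; lia.
- apply: denom => // [|i hi]; first exact: ltW.
  apply: le_trans (ler_norm _).
  case/andP: hx => hx _.
  rewrite natrB; last lia.
  rewrite natrD; rewrite gam in hx; rewrite mulrBr mulrDr; lra.
- by rewrite nat_rev (@ratio _ s h t) // natr_prod.
Qed.
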